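(* Let $f$ be a tournament solution that is TS-Condorcet consistent. Then $f$-Approval is monotonic if and only if $f$ satisfies both the TS-exclusive monotonicity criterion and the TS-exclusive negative monotonicity (ENM) criterion.
   Context: A tournament $T=(V(T),\succ)$ is a finite set of candidates with an asymmetric and complete binary relation $\succ$. $N^+_T(c)=\{b: c\succ b\}$ is the set of outneighbors of $c$; $T[B]$ is the subtournament induced by $B\subseteq V(T)$. The source (Condorcet winner) of $T$ is a candidate $a$ with $a\succ b$ for all $b\neq a$. A tournament solution $f$ maps every tournament $T$ to a nonempty subset $f(T)\subseteq V(T)$. An election $\mathcal{E}=(\mathcal{C},\mathcal{T})$ consists of a finite candidate set $\mathcal{C}$ and a finite list $\mathcal{T}$ of votes, each a tournament on $\mathcal{C}$. $f$-Approval gives each candidate $c$ the score $|\{T\in\mathcal{T}: c\in f(T)\}|$ (with multiplicity) and its winners are the candidates of highest score. Say a pair of tournaments $T=(\mathcal{C},\succ)$, $T'=(\mathcal{C},\succ')$ is a $c$-improvement (for $c\in\mathcal{C}$) if $T[\mathcal{C}\setminus\{c\}]=T'[\mathcal{C}\setminus\{c\}]$ and $N^+_T(c)\subseteq N^+_{T'}(c)$. - $f$ is TS-Condorcet consistent if $f(T)=\{w\}$ whenever $T$ has a source $w$. - $f$ is TS-exclusive monotonic if for every $c$-improvement $(T,T')$ with $c\in f(T)$, we have $c\in f(T')$ and $f(T')\subseteq f(T)$. - $f$ satisfies TS-ENM if for every $c$-improvement $(T,T')$ with $c\notin f(T)$, $f(T')\not\subseteq f(T)$ implies $c\in f(T')$.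 - A voting correspondence $\varphi$ is monotonic if for every two elections $\mathcal{E}=(\mathcal{C},(T_1,\dots,T_n))$, $\mathcal{E}'=(\mathcal{C},(T_1',\dots,T_n'))$ and every $c\in\varphi(\mathcal{E})$ such that $(T_i,T_i')$ is a $c$-improvement for every $i$, it holds that $c\in\varphi(\mathcal{E}')$. *)

(* Defs.v *)
From mathcomp Require Import all_boot.
Set Implicit Arguments. Unset Strict Implicit. Unset Printing Implicit Defensive.

Definition is_tournament (C : finType) (T : rel C) : Prop :=
  (forall a b : C, T a b -> ~~ T b a) /\
  (forall a b : C, a != b -> T a b || T b a).

Definition outn (C : finType) (T : rel C) (c : C) : {set C} := [set b | T c b].

Definition is_source (C : finType) (T : rel C) (w : C) : Prop :=
  forall b : C, b != w -> T w b.

(* A (candidate) tournament solution: a function on relations over every finite type;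
   only its values on tournaments matter. *)
Definition tsolution := forall C : finType, rel C -> {set C}.

Definition is_tournament_solution (f : tsolution) : Prop :=
  forall (C : finType) (T : rel C), 0 < #|C| -> is_tournament T -> f C T != set0.

Definition c_improvement (C : finType) (c : C) (T T' : rel C) : Prop :=
  [/\ is_tournament T, is_tournament T',
      (forall a b : C, a != c -> b != c -> T a b = T' a b)
    & outn T c \subset outn T' c].

Definition TS_Condorcet_consistent (f : tsolution) : Prop :=
  forall (C : finType) (T : rel C) (w : C),
    is_tournament T -> is_source T w -> f C T = [set w].

Definition TS_exclusive_monotonic (f : tsolution) : Prop :=
  forall (C : finType) (c : C) (T T' : rel C),
    c_improvement c T T' -> c \in f C T ->
    c \in f C T' /\ f C T' \subset f C T.

Definition TS_ENM (f : tsolution) : Prop :=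
  forall (C : finType) (c : C) (T T' : rel C),
    c_improvement c T T' -> c \notin f C T ->
    ~~ (f C T' \subset f C T) -> c \in f C T'.

(* Elections: candidate set C and a list of n votes (tournaments), indexed by 'I_n
   (multiplicity is respected). *)
Definition election_ok (C : finType) (n : nat) (E : 'I_n -> rel C) : Prop :=
  forall i, is_tournament (E i).

Definition approval_score (f : tsolution) (C : finType) (n : nat)
  (E : 'I_n -> rel C) (c : C) : nat := #|[set i : 'I_n | c \in f C (E i)]|.

Definition approval_winners (f : tsolution) (C : finType) (n : nat)
  (E : 'I_n -> rel C) : {set C} :=
  [set c | [forall d, approval_score f E d <= approval_score f E c]].

Definition approval_monotonic (f : tsolution) : Prop :=
  forall (C : finType) (n : nat) (E E' : 'I_n -> rel C) (c : C),
    election_ok E -> election_ok E' ->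
    c \in approval_winners f E ->
    (forall i, c_improvement c (E i) (E' i)) ->
    c \in approval_winners f E'.

(* Main.v *)
Require Import Defs.
From mathcomp Require Import all_boot.
Set Implicit Arguments. Unset Strict Implicit.

Lemma scoreE (f : tsolution) (C : finType) (n : nat) (E : 'I_n -> rel C) (c : C) :
  approval_score f E c = \sum_(i < n) (c \in f C (E i) : nat).
Proof.
rewrite /approval_score -sum1dep_card big_mkcond /=.
by apply: eq_bigr => i _; case: (c \in f C (E i)).
Qed.

Definition srcT (C : finType) (w : C) : rel C :=
  fun a b => (a != b) && ((a == w) || ((b != w) && (enum_rank a < enum_rank b))).

Lemma srcT_tour (C : finType) (w : C) : is_tournament (srcT w).
Proof.
split.
- move=> a b; rewrite /srcT => /andP [ab H]; rewrite (eq_sym b a) ab /=.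
  case: (eqVneq a w) H => [aw | aw] /=.
    by move=> _; rewrite -aw orbF eq_sym.
  case: (eqVneq b w) => //= bw H; apply/negP => H2.
  by move: (ltn_trans H H2); rewrite ltnn.
- move=> a b ab; rewrite /srcT ab (eq_sym b a) ab /=.
  case: (eqVneq a w) => //= aw; case: (eqVneq b w) => //= bw.
  case: (ltngtP (enum_rank a) (enum_rank b)) => // /val_inj /enum_rank_inj E.
  by rewrite E eqxx in ab.
Qed.

Lemma srcT_source (C : finType) (w : C) : is_source (srcT w) w.
Proof. by move=> b bw; rewrite /srcT eq_sym bw eqxx. Qed.

Lemma cimp_refl (C : finType) (c : C) (T : rel C) : is_tournament T -> c_improvement c T T.
Proof. by move=> HT; split. Qed.

Lemma winnersP (f : tsolution) (C : finType) (n : nat) (E : 'I_n -> rel C) (c : C) :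
  reflect (forall d, approval_score f E d <= approval_score f E c) (c \in approval_winners f E).
Proof. by rewrite /approval_winners inE; apply: forallP. Qed.

Theorem theorem2 (f : tsolution) :
  is_tournament_solution f -> TS_Condorcet_consistent f ->
  (approval_monotonic f <-> TS_exclusive_monotonic f /\ TS_ENM f).
Proof.
move=> Hts Hcc; split.
- move=> Hmon; split.
  + move=> C c T T' Hi ci; have Hi' := Hi; case: Hi' => tT tT' _ _.
    have ci' : c \in f C T'.
      apply/negPn/negP => cn.
      have := Hmon C 1 (fun _ => T) (fun _ => T') c (fun _ => tT) (fun _ => tT').
      case/(_ _ (fun _ => Hi))/Wrap.
        apply/winnersP => d; rewrite !scoreE !big_ord1 ci.
        by case: (d \in _).
      move/winnersP => H.
      have : f C T' != set0 by apply: Hts => //; apply/card_gt0P; exists c.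
      case/set0Pn => d dT'; have := H d; by rewrite !scoreE !big_ord1 dT' (negbTE cn).
    split => //; apply/subsetP => d dT'; apply/negPn/negP => dn.
    have cd : c != d by apply: contraNneq dn => <-.
    pose E := fun i : 'I_2 => if val i == 0 then T else srcT d.
    pose E' := fun i : 'I_2 => if val i == 0 then T' else srcT d.
    have okE : election_ok E by move=> i; rewrite /E; case: ifP => _ //; exact: srcT_tour.
    have okE' : election_ok E' by move=> i; rewrite /E'; case: ifP => _ //; exact: srcT_tour.
    have Fd : f C (srcT d) = [set d] by apply: Hcc; [exact: srcT_tour | exact: srcT_source].
    have := Hmon C 2 E E' c okE okE'.
    case/(_ _ _)/Wrap.
      apply/winnersP => x; rewrite !scoreE !big_ord_recl !big_ord0 /E /= Fd !inE ci.
      by rewrite eq_sym (negbTE cd); case: (eqVneq x d) => [->|]; rewrite ?(negbTE dn) //=; case: (_ \in _).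
      move=> i; rewrite /E /E'; case: ifP => _ //; exact: cimp_refl (srcT_tour d).
    move/winnersP => H; have := H d.
    by rewrite !scoreE !big_ord_recl !big_ord0 /E' /= Fd !inE dT' ci' eqxx (negbTE cd).
  + move=> C c T T' Hi cn nsub; have Hi' := Hi; case: Hi' => tT tT' _ _.
    apply/negPn/negP => cn'.
    have [d dT' dn] := subsetPn nsub.
    have cd : c != d by apply: contraNneq cn' => ->.
    pose E := fun i : 'I_3 => if val i == 0 then T else if val i == 1 then srcT c else srcT d.
    pose E' := fun i : 'I_3 => if val i == 0 then T' else if val i == 1 then srcT c else srcT d.
    have okE : election_ok E.
      by move=> i; rewrite /E; case: ifP => _ //; case: ifP => _; exact: srcT_tour.
    have okE' : election_ok E'.
      by move=> i; rewrite /E'; case: ifP => _ //; case: ifP => _; exact: srcT_tour.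
    have Fd : f C (srcT d) = [set d] by apply: Hcc; [exact: srcT_tour | exact: srcT_source].
    have Fc : f C (srcT c) = [set c] by apply: Hcc; [exact: srcT_tour | exact: srcT_source].
    have := Hmon C 3 E E' c okE okE'.
    case/(_ _ _)/Wrap.
      apply/winnersP => x; rewrite !scoreE !big_ord_recl !big_ord0 /E /= Fd Fc !inE (negbTE cn).
      rewrite eqxx (negbTE cd) /=.
      case: (eqVneq x c) => [->|xc]; first by rewrite (negbTE cn) (negbTE cd).
      case: (eqVneq x d) => [->|xd]; first by rewrite (negbTE dn).
      by case: (_ \in _).
      move=> i; rewrite /E /E'; case: ifP => _ //; case: ifP => _; exact: cimp_refl (srcT_tour _).
    move/winnersP => H; have := H d.
    by rewrite !scoreE !big_ord_recl !big_ord0 /E' /= Fd Fc !inE dT' (negbTE cn') !eqxx (negbTE cd) eq_sym (negbTE cd).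
- case=> Hem Henm C n E E' c okE okE' /winnersP Hw Himp; apply/winnersP => d.
  have key : forall i, (d \in f C (E' i) : nat) + (c \in f C (E i))
                       <= (c \in f C (E' i) : nat) + (d \in f C (E i)).
    move=> i; have Hi := Himp i.
    case: (boolP (c \in f C (E i))) => ci.
      have [ci' sub] := Hem _ _ _ _ Hi ci.
      rewrite ci'; case: (boolP (d \in f C (E' i))) => //= di.
      by rewrite (subsetP sub _ di).
    case: (boolP (c \in f C (E' i))) => ci'.
      by case: (d \in f C (E' i)); case: (d \in f C (E i)).
    case: (boolP (f C (E' i) \subset f C (E i))) => sub; last first.
      by rewrite (Henm _ _ _ _ Hi ci sub) in ci'.
    case: (boolP (d \in f C (E' i))) => //= di.
    by rewrite (subsetP sub _ di).
  have := Hw d; rewrite !scoreE => Hd.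
  have S : \sum_(i < n) (d \in f C (E' i) : nat) + \sum_(i < n) (c \in f C (E i) : nat)
        <= \sum_(i < n) (c \in f C (E' i) : nat) + \sum_(i < n) (d \in f C (E i) : nat).
    rewrite -!big_split /=; exact: leq_sum.
  have := leq_add (leqnn (\sum_(i < n) (c \in f C (E' i) : nat))) Hd.
  move=> H2; have := leq_trans S H2; by rewrite leq_add2r.
Qed.
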